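(* Let $\lambda\in\mathbb R$ and $\gamma\in[0,\tfrac12]$, and for $\delta\in[\gamma/2,\tfrac12]$ define \[\vartheta^\star(\delta)=2\big(\lambda+H(\delta)-1\big)+(1-\gamma)\Big(1-H\Big(\frac{\delta-\gamma/2}{1-\gamma}\Big)\Big)\] (for $\gamma=1$ not applicable; here $1-\gamma\ge \tfrac12$). Then $\vartheta^\star$ attains its minimum over $[\gamma/2,\tfrac12]$ at $\delta_{\min}=\tfrac12\big(1-\sqrt{1-2\gamma}\big)$, and $\vartheta^\star(\delta_{\min})=2\lambda+H(\gamma)-1$.
   Context: All logarithms are base 2. $H(x)=-x\log x-(1-x)\log(1-x)$ for $x\in(0,1)$, $H(0)=H(1)=0$. *)

(* Defs.v *)
From Stdlib Require Import Reals Lra.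
Open Scope R_scope.

Definition log2 (x : R) : R := ln x / ln 2.

(* binary entropy: H(x) = -x log x - (1-x) log(1-x) on (0,1), H(0)=H(1)=0
   (values outside [0,1] are never used). *)
Definition H (x : R) : R :=
  if Rlt_dec 0 x then
    if Rlt_dec x 1 then - x * log2 x - (1 - x) * log2 (1 - x) else 0
  else 0.

Definition theta_star (lam gam delta : R) : R :=
  2 * (lam + H delta - 1) + (1 - gam) * (1 - H ((delta - gam / 2) / (1 - gam))).

Definition delta_min (gam : R) : R := (1 - sqrt (1 - 2 * gam)) / 2.

(* Main.v *)
Require Import Defs.
From Stdlib Require Import Reals.
From Stdlib Require Import Lra Psatz.
Open Scope R_scope.

Lemma ln_le_sub1 (y : R) : 0 < y -> ln y <= y - 1.
Proof.
  intro hy. pose proof (exp_ineq1_le (ln y)) as h. rewrite exp_ln in h; lra.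
Qed.

Lemma ln_div' (x y : R) : 0 < x -> 0 < y -> ln (x / y) = ln x - ln y.
Proof.
  intros hx hy. unfold Rdiv. rewrite ln_mult; [|lra|now apply Rinv_0_lt_compat].
  rewrite ln_Rinv; lra.
Qed.

Lemma gibbs (p x : R) : 0 < p -> 0 < x -> p * ln p - p * ln x >= p - x.
Proof.
  intros hp hx. pose proof (ln_le_sub1 (x / p)) as h.
  assert (hxp : 0 < x / p) by (apply Rdiv_lt_0_compat; lra).
  specialize (h hxp). rewrite ln_div' in h by lra.
  assert (hm : p * (ln x - ln p) <= p * (x / p - 1)) by (apply Rmult_le_compat_l; lra).
  replace (p * (x / p - 1)) with (x - p) in hm by (field; lra). lra.
Qed.

Lemma ln2pos : 0 < ln 2.
Proof. pose proof ln_lt_2; lra. Qed.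

Lemma Hf (x : R) : 0 < x < 1 -> H x = (- x * ln x - (1 - x) * ln (1 - x)) / ln 2.
Proof.
  intros [h1 h2]. unfold H, log2.
  destruct (Rlt_dec 0 x); [|lra]. destruct (Rlt_dec x 1); [|lra].
  pose proof ln2pos. field. lra.
Qed.

Lemma H_zero : H 0 = 0.
Proof. unfold H. destruct (Rlt_dec 0 0); lra. Qed.

Lemma theta_expr lam g d : 0 < g <= 1/2 -> g/2 < d <= 1/2 ->
  theta_star lam g d * ln 2 =
  2*(lam-1)*ln 2 + 2*(- d * ln d - (1-d) * ln (1-d)) + (1-g) * ln 2
  + (d - g/2) * ln (d - g/2) + (1 - g/2 - d) * ln (1 - g/2 - d) - (1-g) * ln (1-g).
Proof.
  intros hg hd. pose proof ln2pos.
  unfold theta_star.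
  rewrite (Hf d) by lra.
  assert (hv : 0 < (d - g/2)/(1-g) < 1).
  { split. apply Rdiv_lt_0_compat; lra. apply Rmult_lt_reg_r with (1-g); [lra|].
    unfold Rdiv; rewrite Rmult_assoc, Rinv_l by lra. lra. }
  rewrite (Hf _ hv).
  replace (1 - (d - g/2)/(1-g)) with ((1 - g/2 - d)/(1-g)) by (field; lra).
  rewrite !ln_div' by lra.
  field. lra.
Qed.

Lemma theta_expr0 lam g : 0 < g <= 1/2 ->
  theta_star lam g (g/2) * ln 2 =
  2*(lam-1)*ln 2 + 2*(- (g/2) * ln (g/2) - (1-g/2) * ln (1-g/2)) + (1-g) * ln 2.
Proof.
  intros hg. pose proof ln2pos.
  unfold theta_star.
  rewrite (Hf (g/2)) by lra.
  replace ((g/2 - g/2)/(1-g)) with 0 by (field; lra).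
  rewrite H_zero. field. lra.
Qed.

Lemma Hg_expr g : 0 < g <= 1/2 -> H g * ln 2 = - g * ln g - (1-g) * ln (1-g).
Proof. intros hg. pose proof ln2pos. rewrite Hf by lra. field. lra. Qed.

Theorem mainTheorem4 (lam gam : R) (hg0 : 0 <= gam) (hg1 : gam <= 1 / 2) :
  gam / 2 <= delta_min gam <= 1 / 2 /\
  (forall delta : R, gam / 2 <= delta <= 1 / 2 ->
     theta_star lam gam (delta_min gam) <= theta_star lam gam delta) /\
  theta_star lam gam (delta_min gam) = 2 * lam + H gam - 1.
Proof.
  set (s := sqrt (1 - 2*gam)).
  assert (hs0 : 0 <= s) by apply sqrt_pos.
  assert (hs2 : s * s = 1 - 2*gam) by (apply sqrt_sqrt; lra).
  assert (hs1 : s <= 1) by nra.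
  assert (ha : delta_min gam = (1 - s)/2) by reflexivity.
  assert (hga : gam/2 = delta_min gam * (1 - delta_min gam)) by (rewrite ha; nra).
  assert (hb1 : gam / 2 <= delta_min gam <= 1 / 2) by (rewrite ha; nra).
  split; [exact hb1|].
  destruct (Req_dec gam 0) as [g0|gpos].
  -
    subst gam.
    assert (hd0 : delta_min 0 = 0) by (rewrite ha; nra).
    assert (ht0 : theta_star lam 0 (delta_min 0) = 2*lam - 1).
    { rewrite hd0. unfold theta_star. replace ((0 - 0/2)/(1-0)) with 0 by field.
      rewrite H_zero. ring. }
    rewrite ht0, H_zero. split; [|ring].
    intros d hd. unfold theta_star.
    replace ((d - 0/2)/(1-0)) with d by field.
    assert (0 <= H d).
    { destruct (Req_dec d 0) as [->|dn]; [rewrite H_zero; lra|].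
      pose proof ln2pos. rewrite Hf by lra.
      apply Rmult_le_pos; [|left; apply Rinv_0_lt_compat; lra].
      assert (ln d < 0) by (rewrite <- ln_1; apply ln_increasing; lra).
      assert (ln (1-d) < 0) by (rewrite <- ln_1; apply ln_increasing; lra).
      nra. }
    lra.
  - assert (hg : 0 < gam <= 1/2) by lra.
    pose proof ln2pos as L.
    set (a := delta_min gam) in *.
    assert (a_pos : 0 < a) by nra.
    assert (hastr : gam/2 < a) by nra.
    assert (hval : theta_star lam gam a * ln 2 = (2*lam + H gam - 1) * ln 2).
    { rewrite theta_expr by lra.
      replace ((2*lam + H gam - 1) * ln 2) with (2*lam*ln 2 + H gam * ln 2 - ln 2) by ring.
      rewrite Hg_expr by lra.
      replace (a - gam/2) with (a*a) by nra.
      replace (1 - gam/2 - a) with ((1-a)*(1-a)) by nra.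
      assert (hgam : gam = 2 * (a * (1-a))) by nra.
      assert (hlg : ln gam = ln 2 + (ln a + ln (1-a))).
      { rewrite hgam at 1. rewrite !ln_mult by nra. ring. }
      rewrite hlg, !ln_mult by nra.
      rewrite hgam. ring. }
    assert (hvaleq : theta_star lam gam a = 2*lam + H gam - 1).
    { apply Rmult_eq_reg_r with (ln 2); [exact hval|lra]. }
    split; [|exact hvaleq].
    intros d hd.
    apply Rmult_le_reg_r with (ln 2); [lra|].
    rewrite hval.
    replace ((2*lam + H gam - 1) * ln 2) with (2*lam*ln 2 + H gam * ln 2 - ln 2) by ring.
    rewrite Hg_expr by lra.
    assert (dpos : 0 < d) by lra.
    assert (g3 : gam * ln gam - gam * ln (2 * (d * (1-d))) >= gam - 2*(d*(1-d)))
      by (apply gibbs; nra).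
    rewrite !ln_mult in g3 by nra.
    assert (g2 : (1-gam/2-d) * ln (1-gam/2-d) - (1-gam/2-d) * ln ((1-d)*(1-d))
                 >= (1-gam/2-d) - (1-d)*(1-d)) by (apply gibbs; nra).
    rewrite ln_mult in g2 by nra.
    destruct (Req_dec d (gam/2)) as [deq|dne].
    + rewrite deq in g2, g3 |- *. rewrite theta_expr0 by lra.
      assert (e : 1 - gam/2 - gam/2 = 1 - gam) by field. rewrite e in g2.
      nra.
    + rewrite theta_expr by lra.
      assert (g1 : (d-gam/2) * ln (d-gam/2) - (d-gam/2) * ln (d*d)
                 >= (d-gam/2) - d*d) by (apply gibbs; nra).
      rewrite ln_mult in g1 by nra.
      nra.
Qed.
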